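(* Let $\mathcal{X}$ be a non-empty set and $\mathcal{B}\subseteq\mathcal{P}(\mathcal{X})\setminus\{\emptyset\}$ such that $\mathcal{B}^*:=\mathcal{B}\cup\{\emptyset\}$ is a sigma field. Then for any $g\in\mathcal{G}_{\geq0}(\mathcal{X})$, $g$ is $\mathcal{B}^*$-measurable in the usual measure-theoretic sense if and only if $g$ is $\mathcal{B}$-measurable in the sense defined below.
   Context: $\mathcal{G}_{\geq0}(\mathcal{X})$ is the set of bounded non-negative real functions on $\mathcal{X}$; $\mathbb{I}_B$ is the indicator of $B$. A function $g\in\mathcal{G}_{\geq0}(\mathcal{X})$ is simple $\mathcal{B}$-measurable if there are $c_0\geq0$, $n\in\mathbb{N}\cup\{0\}$ and, for $k=1,\dots,n$, $c_k\geq0$ and $B_k\in\mathcal{B}$ with $g=c_0+\sum_{k=1}^nc_k\mathbb{I}_{B_k}$. A function $g\in\mathcal{G}_{\geq0}(\mathcal{X})$ is $\mathcal{B}$-measurable if there is a sequence $(g_n)_{n\in\mathbb{N}}$ of simple $\mathcal{B}$-measurable functions in $\mathcal{G}_{\geq0}(\mathcal{X})$ with $\lim_{n\to\infty}\sup_{x}|g(x)-g_n(x)|=0$. *)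

(* Defs.v *)
From HB Require Import structures.
From mathcomp Require Import all_boot all_order all_algebra.
From mathcomp Require Import all_classical all_reals all_analysis.
Set Implicit Arguments. Unset Strict Implicit. Unset Printing Implicit Defensive.
Import Order.TTheory GRing.Theory Num.Theory.
Local Open Scope classical_set_scope.
Local Open Scope ring_scope.
Import numFieldNormedType.Exports.

Definition bnd_nonneg {R : realType} {X : Type} (g : X -> R) : Prop :=
  (forall x, 0 <= g x) /\ exists M : R, forall x, `|g x| <= M.

Definition Bstar {X : Type} (B : set (set X)) : set (set X) := B `|` [set set0].

Definition simple_Bmeas {R : realType} {X : Type} (B : set (set X)) (g : X -> R) : Prop :=
  bnd_nonneg g /\
  exists (c0 : R) (n : nat) (c : 'I_n -> R) (Bk : 'I_n -> set X),
    0 <= c0 /\ (forall k, 0 <= c k) /\ (forall k, B (Bk k)) /\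
    g = (fun x => c0 + \sum_(k < n) c k * \1_(Bk k) x).

Definition Bmeas {R : realType} {X : Type} (B : set (set X)) (g : X -> R) : Prop :=
  bnd_nonneg g /\
  exists gn : nat -> X -> R, (forall n, simple_Bmeas B (gn n)) /\
    (fun n => sup (range (fun x => `|g x - gn n x|))) @ \oo --> 0.

Definition usual_meas {R : realType} {X : Type} (F : set (set X)) (g : X -> R) : Prop :=
  forall A : set R, measurable A -> F (g @^-1` A).

(* Main.v *)
Require Import Defs.
From HB Require Import structures.
From mathcomp Require Import all_boot all_order all_algebra.
From mathcomp Require Import all_classical all_reals all_analysis.
From mathcomp Require Import lra.
From mathcomp Require Import measurable_realfun.
Import Order.TTheory GRing.Theory Num.Theory.
Local Open Scope classical_set_scope.
Local Open Scope ring_scope.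

Definition PX (X : Type) (x : X) : Type := X.
Section PT.
Variables (X : Type) (x0 : X).
HB.instance Definition _ := gen_eqMixin (@PX X x0).
HB.instance Definition _ := gen_choiceMixin (@PX X x0).
HB.instance Definition _ := isPointed.Build (@PX X x0) x0.
End PT.

Lemma usual_measE (R : realType) (X : Type) (x0 : X) (F : set (set X))
  (sF : sigma_algebra setT F) (f : X -> R) :
  usual_meas F f <->
  measurable_fun (setT : set (g_sigma_algebraType (F : set (set (@PX X x0))))) f.
Proof.
split.
- move=> uf _ Y mY; rewrite setTI; apply: sub_sigma_algebra; exact: uf.
- move=> mf A mA; have := mf measurableT A mA; rewrite setTI.
  by rewrite /measurable /= sigma_algebra_id.
Qed.

Lemma count_lem (R : realType) (m y : R) (N : nat) : 0 < m -> 0 <= y ->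
  let S := \sum_(k < N) m^-1 * (((k.+1)%:R / m <= y)%R : bool)%:R in
  (N%:R / m <= y -> S = N%:R / m) /\ (y < N%:R / m -> y - m^-1 < S <= y).
Proof.
move=> m0 y0; elim: N => [|N [IH1 IH2]] /=.
  rewrite big_ord0 mul0r; split => // h; lra.
rewrite big_ord_recr /=.
have mi0 : 0 < m^-1 by rewrite invr_gt0.
have E : forall k : nat, k%:R / m = k%:R * m^-1 by [].
have hN : N.+1%:R / m = N%:R / m + m^-1 by rewrite -natr1 mulrDl mul1r.
case: (leP (N.+1%:R / m) y) => h.
- have h' : N%:R / m <= y.
    apply: le_trans h; rewrite ler_pM2r // ler_nat //.
  rewrite IH1 // mulr1; split => // _; by rewrite hN.
- rewrite mulr0 addr0; split => // _.
  move: hN h IH1 IH2; set a := N%:R / m; set b := N.+1%:R / m; set c := m^-1.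
  move=> hN h IH1 IH2.
  case: (leP a y) => h2.
  + rewrite IH1 //; lra.
  + exact: IH2.
Qed.

Lemma simple_usual (R : realType) (X : Type) (x0 : X) (B : set (set X))
  (sF : sigma_algebra setT (Bstar B)) (f : X -> R) :
  simple_Bmeas B f -> usual_meas (Bstar B) f.
Proof.
move=> [_ [c0 [n [c [Bk [_ [_ [HB ->]]]]]]]].
apply: (proj2 (usual_measE _ _ x0 _ sF _)).
rewrite (_ : (fun x => _) = cst c0 \+ (fun x => \sum_(k < n) (cst (c k) \* \1_(Bk k)) x)) //.
apply: measurable_funD; first exact: measurable_cst.
apply: measurable_sum => i; apply: measurable_funM; first exact: measurable_cst.
apply: measurable_indic; apply: sub_sigma_algebra; left; exact: HB.
Qed.

Lemma back_dir (R : realType) (X : Type) (x0 : X) (B : set (set X))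
  (sF : sigma_algebra setT (Bstar B)) (g : X -> R) :
  Bmeas B g -> usual_meas (Bstar B) g.
Proof.
move=> [[g0 [M gM]] [h [hs hc]]].
have hm : forall n, usual_meas (Bstar B) (h n) by move=> n; exact: (simple_usual _ _ x0 _ sF _ (hs n)).
apply: (proj2 (usual_measE _ _ x0 _ sF _)).
apply: (@measurable_fun_cvg _ (g_sigma_algebraType (Bstar B : set (set (@PX X x0)))) R setT h g) => [n|x _].
  exact: (proj1 (usual_measE _ _ x0 _ sF _) (hm n)).
apply/cvgrPdist_le => e e0.
move/cvgrPdist_le: hc => /(_ e e0); apply: filterS => n.
have [_ [Mh hM]] := (hs n).1.
have hsup : has_sup (range (fun x => `|g x - h n x|)).
  split; first by exists (`|g x0 - h n x0|), x0.
  exists (M + Mh) => _ [z _ <-].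
  by apply: le_trans (ler_normB _ _) _; apply: lerD.
have := sup_upper_bound hsup; move=> /(_ `|g x - h n x|) H.
have {}H := H (ex_intro2 _ _ x I erefl).
rewrite sub0r normrN => H2.
apply: le_trans H _; apply: le_trans (ler_norm _) H2.
Qed.

Definition pre {R : realType} {X : Type} (g : X -> R) (m : R) (k : nat) : set X :=
  [set x | (k.+1)%:R / m <= g x].
Definition ck {R : realType} {X : Type} (g : X -> R) (m : R) (k : nat) : R :=
  if pselect (pre g m k = set0) then 0 else m^-1.
Definition Bk {R : realType} {X : Type} (g : X -> R) (m : R) (k : nat) : set X :=
  if pselect (pre g m k = set0) then setT else pre g m k.
Definition appr {R : realType} {X : Type} (g : X -> R) (m : R) (N : nat) : X -> R :=
  fun x => 0 + \sum_(k < N) ck g m k * \1_(Bk g m k) x.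

Lemma apprE (R : realType) (X : Type) (g : X -> R) (m : R) (N : nat) x :
  appr g m N x = \sum_(k < N) m^-1 * ((((k.+1)%:R / m <= g x)%R : bool)%:R).
Proof.
rewrite /appr add0r; apply: eq_bigr => k _; rewrite /ck /Bk.
case: pselect => [e|ne] /=.
- rewrite mul0r.
  have H : ~ ((k.+1)%:R / m <= g x).
    by move=> H; have : pre g m k x := H; rewrite e.
  by move/negP/negbTE: H ->; rewrite mulr0.
- rewrite indicE; congr (_ * _%:R). congr nat_of_bool; apply/idP/idP.
  + by move/set_mem.
  + by move=> H; apply: mem_set.
Qed.

Lemma fwd_dir (R : realType) (X : Type) (x0 : X) (B : set (set X))
  (nB0 : ~ B set0) (sF : sigma_algebra setT (Bstar B)) (g : X -> R) :
  bnd_nonneg g -> usual_meas (Bstar B) g -> Bmeas B g.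
Proof.
move=> [g0 [M gM]] ug.
have BT : B setT.
  case: sF => S0 SC _; have := SC _ S0; rewrite setD0 => -[//|/= e].
  by have : (setT : set X) x0 by []; rewrite e.
have gleM : forall x, g x <= M by move=> x; rewrite -(ger0_norm (g0 x)).
have [K HK] : exists K : nat, M < K%:R by exists (Num.Def.trunc M).+1; exact: truncnS_gt.
pose m (n : nat) : R := n.+1%:R.
have m0 : forall n, 0 < m n by move=> n; rewrite /m ltr0n.
have NK : forall n, (n.+1 * K)%:R / m n = K%:R.
  by move=> n; rewrite /m natrM mulrAC mulfV ?mul1r // pnatr_eq0.
have key : forall n x, g x - (m n)^-1 < appr g (m n) (n.+1 * K) x <= g x.
  move=> n x; rewrite apprE.
  have H := proj2 (count_lem _ _ _ (n.+1 * K) (m0 n) (g0 x)).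
  by apply: H; rewrite NK; apply: le_lt_trans (gleM x) HK.
split; first by split; [exact: g0 | exists M].
exists (fun n => appr g (m n) (n.+1 * K)); split.
- move=> n; split.
    split.
      move=> x; rewrite apprE; apply: sumr_ge0 => k _.
      by apply: mulr_ge0; [rewrite invr_ge0 ltW | exact: ler0n].
    exists M => x; have /andP[_ h2] := key n x.
    rewrite ger0_norm; first exact: le_trans h2 (gleM x).
    rewrite apprE; apply: sumr_ge0 => k _.
    by apply: mulr_ge0; [rewrite invr_ge0 ltW | exact: ler0n].
  exists 0, (n.+1 * K)%N, (ck g (m n) \o val), (Bk g (m n) \o val).
  split; first by [].
  split; first by move=> k; rewrite /ck /=; case: ifP => _ //; rewrite invr_ge0 ltW.
  split; last by [].
  move=> k; rewrite /Bk /=; case: (pselect (pre g (m n) k = set0)) => // ne.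
  have : Bstar B (pre g (m n) k).
    rewrite (_ : pre _ _ _ = g @^-1` `[(k.+1%:R / m n), +oo[); last first.
      by apply/seteqP; split => x; rewrite /pre /= in_itv /= andbT.
    apply: ug; exact: measurable_itv.
  by case.
- set s := (fun n => sup _).
  suff Hn : \forall n \near \oo, 0 <= s n <= harmonic n.
    exact: (squeeze_cvgr Hn (cvg_cst 0) cvg_harmonic).
  apply: nearW => n.
  have ub : ubound (range (fun x => `|g x - appr g (m n) (n.+1 * K) x|)) (harmonic n).
    move=> _ [x _ <-]; have /andP[h1 h2] := key n x.
    rewrite /harmonic /= ger0_norm; last by rewrite subr_ge0.
    move: h1 h2; rewrite /m; set a := appr _ _ _ _; set c := (n.+1%:R)^-1; lra.
  apply/andP; split.
  + apply: le_trans (normr_ge0 (g x0 - appr g (m n) (n.+1 * K) x0)) _.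
    apply: sup_upper_bound; last by exists x0.
    split; [by exists (`|g x0 - appr g (m n) (n.+1 * K) x0|), x0 | by exists (harmonic n)].
  + apply: ge_sup => //; by exists (`|g x0 - appr g (m n) (n.+1 * K) x0|), x0.
Qed.

Theorem proposition3 (R : realType) (X : Type) (B : set (set X)) :
  (exists x : X, True) ->
  ~ B set0 ->
  sigma_algebra setT (Bstar B) ->
  forall g : X -> R, bnd_nonneg g ->
    (usual_meas (Bstar B) g <-> Bmeas B g).
Proof.
move=> [x0 _] nB0 sF g gb; split.
- exact: (fwd_dir _ _ x0 _ nB0 sF g gb).
- exact: (back_dir _ _ x0 _ sF g).
Qed.
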